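(* Let $d\ge 2$. For every $M>0$ there is an instance $I$ of the $1$-median problem in $\mathbb{R}^d$ (with four stationary objects) such that $\mathrm{OPT}(I)\ge M$.
   Context: Setting. There are $n\ge 2$ objects in $\mathbb{R}^d$; object $i$ follows a trajectory $p_i:[0,\infty)\to\mathbb{R}^d$ with $|p_i(t)-p_i(s)|\le v|t-s|$ for all $s,t$, where $v>0$ is a known speed bound. The initial positions $p_i(0)$ are known. A query strategy queries one object at each time $t=1,2,3,\dots$; querying object $i$ at time $t$ reveals $p_i(t)$. For $t\ge 0$ let $\tau_i(t)$ be the last time $\le t$ at which object $i$ was queried (or $0$ if never). The uncertainty region of object $i$ at time $t$ is the closed ball $U_i(t)$ of radius $v(t-\tau_i(t))$ centered at $p_i(\tau_i(t))$. For a center function $f$ mapping an $n$-tuple of points to a point, the uncertainty region of the center at time $t$ is $\{f(q_1,\dots,q_n): q_i\in U_i(t)\}$. The size of a set is its diameter. The measure of a strategy on an instance is the supremum over $t\in\{1,2,\dots\}$ of the size of the center's uncertainty region at time $t$ (just after the query at time $t$). The optimal measure $\mathrm{OPT}(I)$ of an instance $I$ is the infimum of the measure over all query sequences, which may be chosen with full knowledge of the trajectories. The center function is the Euclidean $1$-median: a point minimizing $\sum_i |x-q_i|$ over $x\in\mathbb{R}^d$; it is unique unless the points are collinear and $n$ is even, in which case by convention it is the midpoint of the two middle points along the line. *)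

(* Defs.v *)
From HB Require Import structures.
From mathcomp Require Import all_boot all_order all_algebra.
From mathcomp Require Import all_classical all_reals all_analysis.

Set Implicit Arguments.
Unset Strict Implicit.
Unset Printing Implicit Defensive.

Import Order.TTheory GRing.Theory Num.Theory.
Local Open Scope ring_scope.
Local Open Scope classical_set_scope.

Section Defs.
Variable R : realType.
Variable d : nat.

Definition Rpt := 'rV[R]_d.

Definition enorm (x : Rpt) : R := Num.sqrt (\sum_(i < d) (x ord0 i) ^+ 2).
Definition edist (x y : Rpt) : R := enorm (x - y).

(* Trajectories of n objects, defined on [0, oo). *)
Definition speed_bounded (n : nat) (v : R) (p : 'I_n -> R -> Rpt) : Prop :=
  forall i s t, 0 <= s -> 0 <= t -> edist (p i t) (p i s) <= v * `|t - s|.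

Definition stationary (n : nat) (p : 'I_n -> R -> Rpt) : Prop :=
  forall i t, 0 <= t -> p i t = p i 0.

(* A query strategy: sigma t is the object queried at time t (t = 1,2,...;
   sigma 0 is irrelevant). *)
(* last time <= t (and >= 1) at which object i was queried, or 0 *)
Fixpoint last_query (n : nat) (sigma : nat -> 'I_n) (i : 'I_n) (t : nat) : nat :=
  match t with
  | 0 => 0
  | t'.+1 => if sigma t'.+1 == i then t'.+1 else last_query sigma i t'
  end.

Definition closed_ball_e (c : Rpt) (r : R) : set Rpt :=
  [set q | edist q c <= r].

Definition uncertainty (n : nat) (v : R) (p : 'I_n -> R -> Rpt)
    (sigma : nat -> 'I_n) (i : 'I_n) (t : nat) : set Rpt :=
  let tau := last_query sigma i t in
  closed_ball_e (p i tau%:R) (v * (t%:R - tau%:R)).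

Definition collinear (n : nat) (q : 'I_n -> Rpt) : Prop :=
  exists (a u : Rpt) (lam : 'I_n -> R), forall i, q i = a + lam i *: u.

(* In the collinear case
   with n even, it is the midpoint of the two middle points along the line;
   otherwise it is the (unique) minimizer of the sum of distances. *)
Definition median_sum (n : nat) (q : 'I_n -> Rpt) (x : Rpt) : R :=
  \sum_(i < n) edist x (q i).

Definition collinear_midpoint (n : nat) (q : 'I_n -> Rpt) (x : Rpt) : Prop :=
  exists (a u : Rpt) (lam : 'I_n -> R),
    (forall i, q i = a + lam i *: u) /\
    let s := sort <=%R [seq lam i | i <- enum 'I_n] in
    x = a + ((nth 0 s (n./2).-1 + nth 0 s n./2) / 2) *: u.

Definition is_1median (n : nat) (q : 'I_n -> Rpt) (x : Rpt) : Prop :=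
  ((collinear q /\ ~~ odd n) /\ collinear_midpoint q x) \/
  (~ (collinear q /\ ~~ odd n) /\ forall y, median_sum q x <= median_sum q y).

Definition center_region (n : nat) (v : R) (p : 'I_n -> R -> Rpt)
    (sigma : nat -> 'I_n) (t : nat) : set Rpt :=
  [set x | exists q : 'I_n -> Rpt,
      (forall i, uncertainty v p sigma i t (q i)) /\ is_1median q x].

Definition diam (S : set Rpt) : \bar R :=
  ereal_sup [set (edist x y)%:E | x in S & y in S].

Definition strategy_measure (n : nat) (v : R) (p : 'I_n -> R -> Rpt)
    (sigma : nat -> 'I_n) : \bar R :=
  ereal_sup [set diam (center_region v p sigma t) | t in [set t : nat | (0 < t)%N]].

Definition OPT (n : nat) (v : R) (p : 'I_n -> R -> Rpt) : \bar R :=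
  ereal_inf [set strategy_measure v p sigma | sigma in [set: nat -> 'I_n]].

End Defs.

(* Main.v *)
Require Import Defs.
From HB Require Import structures.
From mathcomp Require Import all_boot all_order all_algebra.
From mathcomp Require Import all_classical all_reals all_analysis.
From mathcomp Require Import ring lra.
Import Order.TTheory GRing.Theory Num.Theory.
Set Implicit Arguments.
Unset Strict Implicit.
Local Open Scope ring_scope.
Local Notation edist := Defs.edist.

Lemma sum_sq_ge0 (R : realType) d (x : Rpt R d) : 0 <= \sum_(i < d) x ord0 i ^+ 2.
Proof. by apply: sumr_ge0 => i _; rewrite sqr_ge0. Qed.

Lemma sum_sq_eq0 (R : realType) d (x : Rpt R d) :
  \sum_(i < d) x ord0 i ^+ 2 = 0 -> forall i, x ord0 i = 0.
Proof.
move=> h i; have := psumr_eq0P (P := predT) (fun j _ => sqr_ge0 (x ord0 j)) h (i := i) isT.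
by move/eqP; rewrite sqrf_eq0 => /eqP.
Qed.

Lemma cauchy_schwarz (R : realType) d (x y : Rpt R d) :
  \sum_(i < d) x ord0 i * y ord0 i <= enorm x * enorm y.
Proof.
rewrite /enorm.
set A := \sum_(i < d) x ord0 i ^+ 2; set B := \sum_(i < d) y ord0 i ^+ 2.
have hA := sum_sq_ge0 x; have hB := sum_sq_ge0 y.
have [A0|A0] := eqVneq A 0.
  rewrite big1 ?mulr_ge0 ?sqrtr_ge0 // => i _.
  by rewrite (sum_sq_eq0 A0) mul0r.
have [B0|B0] := eqVneq B 0.
  rewrite big1 ?mulr_ge0 ?sqrtr_ge0 // => i _.
  by rewrite (sum_sq_eq0 B0) mulr0.
set a := Num.sqrt A; set b := Num.sqrt B.
have ha : 0 < a by rewrite sqrtr_gt0 lt_neqAle eq_sym A0 hA.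
have hb : 0 < b by rewrite sqrtr_gt0 lt_neqAle eq_sym B0 hB.
have a2 : a ^+ 2 = A by rewrite sqr_sqrtr.
have b2 : b ^+ 2 = B by rewrite sqr_sqrtr.
have key : \sum_(i < d) (2 * a * b) * (x ord0 i * y ord0 i)
   <= \sum_(i < d) (b ^+ 2 * x ord0 i ^+ 2 + a ^+ 2 * y ord0 i ^+ 2).
  apply: ler_sum => i _.
  rewrite -subr_ge0.
  have -> : b ^+ 2 * x ord0 i ^+ 2 + a ^+ 2 * y ord0 i ^+ 2 - 2 * a * b * (x ord0 i * y ord0 i) = (b * x ord0 i - a * y ord0 i) ^+ 2 by ring.
  exact: sqr_ge0.
rewrite -mulr_sumr big_split /= -!mulr_sumr -/A -/B -a2 -b2 in key.
set S := \sum_(i < d) _ in key *.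
have hab : 0 < 2 * a * b by rewrite !mulr_gt0.
rewrite -(ler_pM2l hab); apply: le_trans key _; rewrite le_eqVlt; apply/orP; left; apply/eqP; ring.
Qed.

Lemma enorm_triangle (R : realType) d (x y : Rpt R d) :
  enorm (x + y) <= enorm x + enorm y.
Proof.
have cs := cauchy_schwarz x y.
have ex : enorm x ^+ 2 = \sum_(i < d) x ord0 i ^+ 2 by rewrite /enorm sqr_sqrtr // sum_sq_ge0.
have ey : enorm y ^+ 2 = \sum_(i < d) y ord0 i ^+ 2 by rewrite /enorm sqr_sqrtr // sum_sq_ge0.
have gx : 0 <= enorm x by rewrite sqrtr_ge0.
have gy : 0 <= enorm y by rewrite sqrtr_ge0.
rewrite -[X in _ <= X](@ger0_norm _ (enorm x + enorm y)) ?addr_ge0 // -sqrtr_sqr.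
rewrite {1}/enorm ler_sqrt ?sqr_ge0 //.
have -> : \sum_(i < d) (x + y) ord0 i ^+ 2 =
   \sum_(i < d) x ord0 i ^+ 2 + 2 * \sum_(i < d) x ord0 i * y ord0 i + \sum_(i < d) y ord0 i ^+ 2.
  rewrite mulr_sumr -!big_split /=; apply: eq_bigr => i _; rewrite mxE; ring.
rewrite -ex -ey.
rewrite -subr_ge0.
have -> : (enorm x + enorm y) ^+ 2 - (enorm x ^+ 2 + 2 * (\sum_(i < d) x ord0 i * y ord0 i) + enorm y ^+ 2) = 2 * (enorm x * enorm y - \sum_(i < d) x ord0 i * y ord0 i) by ring.
by rewrite mulr_ge0 // subr_ge0.
Qed.

Lemma enormN (R : realType) d (x : Rpt R d) : enorm (- x) = enorm x.
Proof. by rewrite /enorm; congr Num.sqrt; apply: eq_bigr => i _; rewrite mxE sqrrN. Qed.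

Lemma enorm0 (R : realType) d : enorm (0 : Rpt R d) = 0.
Proof. by rewrite /enorm big1 ?sqrtr0 // => i _; rewrite mxE expr0n. Qed.

Lemma edistxx (R : realType) d (x : Rpt R d) : edist x x = 0.
Proof. by rewrite /edist subrr enorm0. Qed.

Lemma edistC (R : realType) d (x y : Rpt R d) : edist x y = edist y x.
Proof. by rewrite /edist -enormN opprB. Qed.

Lemma edist_tri (R : realType) d (x y z : Rpt R d) : edist x z <= edist x y + edist y z.
Proof.
rewrite /edist; have -> : x - z = (x - y) + (y - z) by rewrite addrA subrK.
exact: enorm_triangle.
Qed.

Lemma enorm_single (R : realType) d (k : 'I_d) (c : R) : 0 <= c ->
  enorm (\row_(j < d) (if j == k then c else 0)) = c.
Proof.
move=> hc; rewrite /enorm (bigD1 k) //= big1 ?addr0.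
  by rewrite mxE eqxx sqrtr_sqr ger0_norm.
by move=> j /negbTE hj; rewrite mxE hj expr0n.
Qed.

Lemma medA (R : realType) d (q : 'I_4 -> Rpt R d) x :
  (forall i : 'I_4, (val i < 2)%N -> q i = x) ->
  forall y, median_sum q x <= median_sum q y.
Proof.
move=> h y; rewrite /median_sum !big_ord_recl !big_ord0 !addr0.
rewrite (h ord0) // (h (lift ord0 ord0)) // !edistxx !add0r.
rewrite (edistC y x).
have h1 := edist_tri x y (q (lift ord0 (lift ord0 ord0))).
have h2 := edist_tri x y (q (lift ord0 (lift ord0 (lift ord0 ord0)))).

lra.
Qed.

Lemma medB (R : realType) d (q : 'I_4 -> Rpt R d) x :
  (forall i : 'I_4, (2 <= val i)%N -> q i = x) ->
  forall y, median_sum q x <= median_sum q y.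
Proof.
move=> h y; rewrite /median_sum !big_ord_recl !big_ord0 !addr0.
rewrite (h (lift ord0 (lift ord0 ord0))) // (h (lift ord0 (lift ord0 (lift ord0 ord0)))) // !edistxx !addr0.
rewrite (edistC y x).
have h1 := edist_tri x y (q ord0).
have h2 := edist_tri x y (q (lift ord0 ord0)).
lra.
Qed.

Lemma not_col (R : realType) d (q : 'I_4 -> Rpt R d) (i j k : 'I_4) (c0 c1 : 'I_d) :
  (q j - q i) ord0 c0 != 0 -> (q j - q i) ord0 c1 = 0 -> (q k - q i) ord0 c1 != 0 ->
  ~ collinear q.
Proof.
move=> H1 H2 H3 [a [u [lam h]]].
rewrite !h !mxE in H1 H2 H3.
have e : forall l m (c : 'I_d), a ord0 c + l * u ord0 c - (a ord0 c + m * u ord0 c) = (l - m) * u ord0 c by move=> *; ring.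
rewrite !e in H1 H2 H3.
have hj : lam j - lam i != 0 by apply: contraNneq H1 => ->; rewrite mul0r.
move: H2 => /eqP; rewrite mulf_eq0 (negbTE hj) /= => /eqP hu.
by move: H3; rewrite hu mulr0 eqxx.
Qed.

Lemma unc1 (R : realType) d (v : R) (P : 'I_4 -> R -> Rpt R d) sigma (i : 'I_4) q :
  0 <= v -> (forall t, P i t = P i 0) ->
  (q = P i 0 \/ (val (sigma 1%N) != val i /\ edist q (P i 0) <= v)) ->
  uncertainty v P sigma i 1 q.
Proof.
move=> hv hP h; rewrite /uncertainty /closed_ball_e /= hP.
case: h => [->|[hs hd]].
  by rewrite edistxx; case: ifP => _; rewrite ?subrr ?mulr0 // subr0 mulr1.
have -> : (sigma 1%N == i) = false by apply/negbTE; apply: contra hs => /eqP ->.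
by rewrite subr0 mulr1.
Qed.

Theorem proposition6 (R : realType) (d : nat) (hd : (2 <= d)%N)
    (v : R) (hv : 0 < v) (M : R) (hM : 0 < M) :
  exists p : 'I_4 -> R -> Rpt R d,
    speed_bounded v p /\ stationary p /\ (M%:E <= OPT v p)%E.
Proof.
have hd0 : (0 < d)%N by apply: leq_trans hd.
pose i0 : 'I_d := Ordinal hd0.
pose i1 : 'I_d := Ordinal hd.
pose b : Rpt R d := \row_(j < d) (if j == i0 then M else 0).
pose w : Rpt R d := \row_(j < d) (if j == i1 then v else 0).
have nb : enorm b = M by rewrite enorm_single ?ltW.
have nw : enorm w = v by rewrite enorm_single ?ltW.
have b0 : b ord0 i0 = M by rewrite mxE eqxx.
have b1 : b ord0 i1 = 0 by rewrite mxE.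
have w1 : w ord0 i1 = v by rewrite mxE eqxx.
pose P : 'I_4 -> R -> Rpt R d := fun i _ => if (val i < 2)%N then 0 else b.
exists P; split; [|split].
- move=> i s t _ _; rewrite /P /= edistxx mulr_ge0 ?normr_ge0 ?ltW //.
- by move=> i t _.
apply: le_ereal_inf_tmp => _ [sigma _ <-].
have hs1 : forall i : 'I_4, (val (sigma 1%N) != val i) \/ (val (sigma 1%N) == val i) by move=> i; case: eqP; auto.
pose kn := if val (sigma 1%N) == 3%N then 2%N else 3%N.
pose qA : 'I_4 -> Rpt R d := fun i => if (val i < 2)%N then 0 else if val i == kn then b + w else b.
have memA : center_region v P sigma 1 0.
  exists qA; split.
    { move=> i; apply: unc1; first exact: ltW.
      by [].
    rewrite /qA /P /kn; case: i => [[|[|[|[|m]]]] Hi] //=; try by left.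
    all: case hs: (val (sigma 1%N) == 3%N) => /=; first [by left | right; split;
      [by rewrite ?hs ?(eqP hs) | by rewrite /edist [b + w]addrC addrK nw]]. }
  right; split; last by apply: medA => i hi; rewrite /qA hi.
  move=> [hc _]; case hs : (val (sigma 1%N) == 3%N).
  - apply: (not_col (i:=@Ordinal 4 0 isT) (j:=@Ordinal 4 3 isT) (k:=@Ordinal 4 2 isT) (c0:=i0) (c1:=i1) _ _ _ hc);
      rewrite /qA /kn /= hs /= subr0.
    + by rewrite b0 lt0r_neq0.
    + by rewrite b1.
    + by rewrite [X in X != 0]mxE b1 w1 add0r lt0r_neq0.
  - apply: (not_col (i:=@Ordinal 4 0 isT) (j:=@Ordinal 4 2 isT) (k:=@Ordinal 4 3 isT) (c0:=i0) (c1:=i1) _ _ _ hc);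
      rewrite /qA /kn /= hs /= subr0.
    + by rewrite b0 lt0r_neq0.
    + by rewrite b1.
    + by rewrite [X in X != 0]mxE b1 w1 add0r lt0r_neq0.
have entB : forall (x y : Rpt R d) c, (x - y) ord0 c = x ord0 c - y ord0 c by move=> *; rewrite !mxE.
pose knB := if val (sigma 1%N) == 1%N then 0%N else 1%N.
pose qB : 'I_4 -> Rpt R d := fun i => if (val i < 2)%N then (if val i == knB then w else 0) else b.
have memB : center_region v P sigma 1 b.
  exists qB; split.
    { move=> i; apply: unc1; first exact: ltW.
      by [].
    rewrite /qB /P /knB; case: i => [[|[|[|[|m]]]] Hi] //=; try by left.
    all: case hs: (val (sigma 1%N) == 1%N) => /=; first [by left | right; split;
      [by rewrite ?hs ?(eqP hs) | by rewrite /edist subr0 nw]]. }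
  right; split; last by apply: medB => i hi; rewrite /qB ltnNge hi.
  move=> [hc _]; case hs : (val (sigma 1%N) == 1%N).
  - apply: (not_col (i:=@Ordinal 4 2 isT) (j:=@Ordinal 4 1 isT) (k:=@Ordinal 4 0 isT) (c0:=i0) (c1:=i1) _ _ _ hc);
      rewrite /qB /knB /= hs /= entB.
    + by rewrite b0 mxE sub0r oppr_eq0 lt0r_neq0.
    + by rewrite b1 subr0 mxE.
    + by rewrite b1 w1 subr0 lt0r_neq0.
  - apply: (not_col (i:=@Ordinal 4 2 isT) (j:=@Ordinal 4 0 isT) (k:=@Ordinal 4 1 isT) (c0:=i0) (c1:=i1) _ _ _ hc);
      rewrite /qB /knB /= hs /= entB.
    + by rewrite b0 mxE sub0r oppr_eq0 lt0r_neq0.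
    + by rewrite b1 subr0 mxE.
    + by rewrite b1 w1 subr0 lt0r_neq0.
have hdiam : (M%:E <= diam (center_region v P sigma 1))%E.
  apply: ereal_sup_ubound; exists b => //; exists 0 => //.
  by rewrite /edist subr0 nb.
apply: le_trans hdiam _; apply: ereal_sup_ubound; by exists 1%N.
Qed.
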